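(* Let $n \ge 3$ and let $x_1, \dots, x_n \in \mathbb{R}$ be pairwise distinct. Then the maximum likelihood estimate $\hat\theta \in \mathbb{H}$ of the sample from the Cauchy distribution satisfies $$\sum_{j=1}^n \frac{x_j - \hat\theta}{x_j - \overline{\hat\theta}} = 0.$$
   Context: $\mathbb{H} = \{\theta\in\mathbb{C}:\Im\theta>0\}$. The Cauchy distribution with parameter $\theta = \mu + i\sigma\in\mathbb{H}$ has density $f(x;\theta) = \frac{\sigma}{\pi}\frac{1}{(x-\mu)^2+\sigma^2}$; the maximum likelihood estimate is the (unique) maximizer over $\mathbb{H}$ of $\prod_{j=1}^n f(x_j;\theta)$. *)

(* Defs.v *)
From HB Require Import structures.
From mathcomp Require Import all_boot all_order all_algebra.
From mathcomp Require Import complex.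
From mathcomp Require Import reals trigo.
Set Implicit Arguments. Unset Strict Implicit. Unset Printing Implicit Defensive.
Import Order.TTheory GRing.Theory Num.Theory.
Local Open Scope ring_scope.


Definition cauchy_density (R : realType) (theta : R[i]) (x : R) : R :=
  complex.Im theta / pi / ((x - complex.Re theta) ^+ 2 + (complex.Im theta) ^+ 2).

Definition likelihood (R : realType) (n : nat) (x : 'I_n -> R) (theta : R[i]) : R :=
  \prod_(j < n) cauchy_density theta (x j).

Definition is_MLE (R : realType) (n : nat) (x : 'I_n -> R) (theta : R[i]) : Prop :=
  0 < complex.Im theta /\
  forall theta' : R[i], 0 < complex.Im theta' -> likelihood x theta' <= likelihood x theta.

(* Main.v *)
Require Import Defs.
From HB Require Import structures.
From mathcomp Require Import all_boot all_order all_algebra.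
From mathcomp Require Import complex.
From mathcomp Require Import reals trigo.
From mathcomp Require Import ring lra.
Import Order.TTheory GRing.Theory Num.Theory.
Local Open Scope ring_scope.
Section Fermat.
Variable R : realFieldType.

Lemma poly_quad_bound (p : {poly R}) (t : R) : `|t| <= 1 ->
  `|p.[t] - p`_0 - p`_1 * t| <= (\sum_(i < size p) `|p`_(i.+2)|) * t ^+ 2.
Proof.
move=> ht.
rewrite (@horner_coef_wide _ (size p).+2) //.
rewrite big_ord_recl big_ord_recl /= expr0 mulr1 expr1.
set S := \sum_(i < _) _.
have -> : p`_0 + (p`_1 * t + S) - p`_0 - p`_1 * t = S by ring.
rewrite /S mulr_suml; apply: le_trans (ler_norm_sum _ _ _) _.
apply: ler_sum => i _; rewrite (_ : bump 0 (bump 0 i) = (2 + i)%N) // exprD.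
rewrite normrM normrM [`|t ^+ 2|]ger0_norm ?sqr_ge0 //.
rewrite mulrCA mulrC; apply: ler_wpM2r; first exact: sqr_ge0.
rewrite normrX -[X in _ <= X]mulr1; apply: ler_wpM2l => //; exact: exprn_ile1.
by rewrite ltnW. Qed.

Lemma fermat_poly (p : {poly R}) :
  (forall t, -1 < t < 1 -> p.[0] <= p.[t]) -> p`_1 = 0.
Proof.
move=> H; apply/eqP; apply/negPn/negP => c0.
set C := \sum_(i < size p) `|p`_(i.+2)|.
have C0 : 0 <= C by apply: sumr_ge0 => i _.
set c := p`_1.
have cn : 0 < `|c| by rewrite normr_gt0.
set e := (C + 2 * `|c| + 1)^-1.
have e0 : 0 < e by rewrite invr_gt0; lra.
have eC : C * e < 1.
  by rewrite /e ltr_pdivrMr; lra.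
have ec : `|c| * e < 1.
  by rewrite /e ltr_pdivrMr; lra.
set t := - c * e.
have ht : `|t| < 1 by rewrite /t normrM normrN ger0_norm ?ltW.
have Hb := poly_quad_bound p t (ltW ht).
have := H t.
rewrite -ltr_norml => /(_ ht).
rewrite horner_coef0 => Ht.
have Hb' : p.[t] - p`_0 - c * t <= C * t^+2 := le_trans (ler_norm _) Hb.
have c2 : 0 < c ^+ 2 by rewrite exprn_even_gt0.
have : c * t + C * t ^+ 2 = c ^+ 2 * e * (C * e - 1) by rewrite /t; ring.
have : c ^+ 2 * e * (C * e - 1) < 0.
  by rewrite pmulr_rlt0 ?subr_lt0 // mulr_gt0.
lra.
Qed.

Lemma coef1_prod (I : Type) (s : seq I) (F : I -> {poly R}) :
  (forall i, (F i)`_0 != 0) ->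
  (\prod_(i <- s) F i)`_1 = (\prod_(i <- s) (F i)`_0) * \sum_(i <- s) (F i)`_1 / (F i)`_0.
Proof.
move=> H; elim: s => [|a s IH]; first by rewrite !big_nil coef1 mulr0.
rewrite !big_cons coefM big_ord_recr big_ord_recl big_ord0 /= IH coef0_prod.
have := H a; set u := (F a)`_0; set P := \prod_(j <- s) (F j)`_0.
move=> Ha; field; exact: Ha.
Qed.
End Fermat.
Lemma lik_cmp (R : realFieldType) n (c k : R) (E D : 'I_n -> R) : 0 < c -> 0 < k ->
  (forall j, 0 < E j) -> (forall j, 0 < D j) ->
  \prod_j (c * k / E j) <= \prod_j (c / D j) -> k ^+ n * \prod_j D j <= \prod_j E j.
Proof.
move=> c0 k0 E0 D0.
have PE : 0 < \prod_j E j by apply: prodr_gt0 => j _.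
have PD : 0 < \prod_j D j by apply: prodr_gt0 => j _.
rewrite !prodf_div !prodr_const card_ord exprMn.
rewrite ler_pdivrMr // mulrAC ler_pdivlMr // -mulrA mulrCA.
have cn : 0 < c ^+ n by rewrite exprn_gt0.
by rewrite mulrCA ler_pM2l.
Qed.
Local Open Scope complex_scope.
Lemma term_eq (R : rcfType) (y mu s : R) : 0 < s ->
  (y%:C - (mu +i* s)) / (y%:C - (mu +i* s)^*) =
  (1 - 2 * s ^+ 2 / ((y - mu) ^+ 2 + s ^+ 2))%:C
   + 'i * (- (2 * s * (y - mu)) / ((y - mu) ^+ 2 + s ^+ 2))%:C.
Proof.
move=> s0.
have D0 : 0 < (y - mu) ^+ 2 + s ^+ 2 by rewrite ltr_wpDl ?sqr_ge0 // exprn_gt0.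
set D := _ + _ in D0 *.
have vnz : y%:C - (mu +i* s)^* != 0.
  by rewrite eq_complex /= negb_and; apply/orP; right; rewrite sub0r opprK gt_eqF.
apply: (mulIf vnz); rewrite divfK //.
apply/eqP; rewrite eq_complex /=; apply/andP; split; apply/eqP.
all: rewrite /D; field; exact: lt0r_neq0.
Qed.

Theorem mainTheorem7 (R : realType) (n : nat) (hn : (3 <= n)%N)
  (x : 'I_n -> R) (hx : injective x) (theta : R[i]) (hmle : is_MLE x theta) :
  \sum_(j < n) (((x j)%:C - theta) / ((x j)%:C - theta^*)) = 0.
Proof.
case: hmle => hs hmax.
case: theta hs hmax => mu s /= hs hmax.
have sq_pos : forall u : R, 0 < u ^+ 2 + s ^+ 2.
  by move=> u; rewrite ltr_wpDl ?sqr_ge0 // exprn_gt0.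
have pi0 : 0 < (pi : R) := pi_gt0 R.
pose a := fun j => x j - mu.
pose D := fun j => a j ^+ 2 + s ^+ 2.
have D0 : forall j, 0 < D j by move=> j; apply: sq_pos.
pose p := fun j : 'I_n => (D j)%:P - (2 * a j) *: 'X + 'X^2 : {poly R}.
have p0 : forall j, (p j)`_0 = D j.
  by move=> j; rewrite /p !(coefD, coefN, coefC, coefZ, coefX, coefXn) /=; ring.
have p1 : forall j, (p j)`_1 = - (2 * a j).
  by move=> j; rewrite /p !(coefD, coefN, coefC, coefZ, coefX, coefXn) /=; ring.
have pE : forall j t, (p j).[t] = (x j - (mu + t)) ^+ 2 + s ^+ 2.
  by move=> j t; rewrite /p !hornerE /D /a; ring.
have hA : \sum_j a j / D j = 0.
  have : (\prod_j p j)`_1 = 0.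
    apply: fermat_poly => t _.
    rewrite !horner_prod.
    have H := hmax ((mu + t) +i* s) hs.
    rewrite /likelihood /cauchy_density /= in H.
    have := @lik_cmp R n (s / pi) 1 (fun j => (p j).[t]) (fun j => (p j).[0]).
    rewrite expr1n mul1r; apply.
    - exact: divr_gt0.
    - exact: ltr01.
    - by move=> j; rewrite pE.
    - by move=> j; rewrite pE addr0.
    have e1 : \prod_j (s / pi * 1 / (p j).[t]) =
      \prod_j (s / pi / ((x j - (mu + t)) ^+ 2 + s ^+ 2)).
      by apply: eq_bigr => j _; rewrite pE mulr1.
    have e2 : \prod_j (s / pi / (p j).[0]) =
      \prod_j (s / pi / ((x j - mu) ^+ 2 + s ^+ 2)).
      by apply: eq_bigr => j _; rewrite pE addr0.
    by rewrite e1 e2.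
  rewrite coef1_prod; last by move=> j; rewrite p0 lt0r_neq0.
  move/eqP; rewrite mulf_eq0 => /orP [|].
    have PD : 0 < \prod_j (p j)`_0 by apply: prodr_gt0 => j _; rewrite p0.
    by rewrite (gt_eqF PD).
  have -> : \sum_j (p j)`_1 / (p j)`_0 = -2 * \sum_j a j / D j.
    by rewrite mulr_sumr; apply: eq_bigr => j _; rewrite p0 p1; ring.
  by rewrite mulf_eq0 oppr_eq0 pnatr_eq0 /= => /eqP.
pose q := fun j : 'I_n => (D j)%:P + (2 * s ^+ 2) *: 'X + (s ^+ 2) *: 'X^2 : {poly R}.
have q0 : forall j, (q j)`_0 = D j.
  by move=> j; rewrite /q !(coefD, coefN, coefC, coefZ, coefX, coefXn) /=; ring.
have q1 : forall j, (q j)`_1 = 2 * s ^+ 2.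
  by move=> j; rewrite /q !(coefD, coefN, coefC, coefZ, coefX, coefXn) /=; ring.
have qE : forall j t, (q j).[t] = (x j - mu) ^+ 2 + (s * (1 + t)) ^+ 2.
  by move=> j t; rewrite /q !hornerD !hornerZ hornerC hornerX hornerXn /D /a; ring.
have o0 : (1 + 'X : {poly R})`_0 = 1.
  by rewrite !(coefD, coefN, coefC, coefZ, coefX, coefXn, coef1) /=; ring.
have o1 : (1 + 'X : {poly R})`_1 = 1.
  by rewrite !(coefD, coefN, coefC, coefZ, coefX, coefXn, coef1) /=; ring.
pose F := \prod_j q j - (\prod_j D j) *: \prod_(j < n) (1 + 'X).
have hB : \sum_j 2 * s ^+ 2 / D j = n%:R.
  have : F`_1 = 0.
    apply: fermat_poly => t /andP [t1 t2].
    rewrite /F !hornerE !horner_prod.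
    have h1 : forall u, (1 + 'X : {poly R}).[u] = 1 + u.
      by move=> u; rewrite hornerD hornerX hornerC.
    rewrite !prodr_const card_ord !h1 addr0 expr1n mulr1.
    rewrite (eq_bigr (fun j => D j)); last by move=> j _; rewrite qE addr0 mulr1.
    rewrite subrr subr_ge0 [X in X <= _]mulrC.
    have H := hmax (mu +i* (s * (1 + t))) (mulr_gt0 hs (_ : 0 < 1 + t)).
    have t0 : 0 < 1 + t by rewrite addrC -ltrBlDr sub0r.
    move: H => /(_ t0).
    rewrite /likelihood /cauchy_density /= => H.
    apply: (@lik_cmp R n (s / pi) (1 + t) (fun j => (q j).[t]) D) => //.
    - exact: divr_gt0.
    - by move=> j; rewrite qE; rewrite ltr_wpDl ?sqr_ge0 // exprn_gt0 // mulr_gt0.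
    have e1 : \prod_j (s / pi * (1 + t) / (q j).[t]) =
      \prod_j (s * (1 + t) / pi / ((x j - mu) ^+ 2 + (s * (1 + t)) ^+ 2)).
      by apply: eq_bigr => j _; rewrite qE; ring.
    by rewrite e1.
  rewrite /F coefB coefZ coef1_prod; last by move=> j; rewrite q0 lt0r_neq0.
  rewrite coef1_prod; last by move=> j; rewrite o0 oner_neq0.
  rewrite (eq_bigr (fun j => D j)); last by move=> j _; rewrite q0.
  rewrite [\sum_i (q i)`_1 / (q i)`_0](eq_bigr (fun j => 2 * s ^+ 2 / D j)); last by move=> j _; rewrite q0 q1.
  have PD : 0 < \prod_j D j by apply: prodr_gt0 => j _.
  rewrite -mulrBr => /eqP; rewrite mulf_eq0 gt_eqF //= subr_eq0 => /eqP ->.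
  by rewrite o0 o1 divr1 prodr_const expr1n mul1r sumr_const card_ord.
have r0 : \sum_j (1 - 2 * s ^+ 2 / D j) = 0.
  by rewrite sumrB hB sumr_const card_ord subrr.
have i0 : \sum_j (- (2 * s * a j) / D j) = 0.
  rewrite (eq_bigr (fun j => (- (2 * s)) * (a j / D j))); last by move=> j _; ring.
  by rewrite -mulr_sumr hA mulr0.
rewrite (eq_bigr (fun j => (1 - 2 * s ^+ 2 / D j)%:C + 'i * (- (2 * s * a j) / D j)%:C)); last first.
  by move=> j _; exact: term_eq.
by rewrite big_split /= -mulr_sumr -!rmorph_sum r0 i0 mulr0 addr0.
Qed.
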